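(* For every integer $m\ge 2$ and every graph $G$, $\hom(S_0;G)\cdot\hom(S_{2,1^{m-2}};G)\ge \hom(S_{2,1^{m-1}};G)$.
   Context: All graphs are finite; $\hom(H;G)$ is the number of graph homomorphisms from $H$ to $G$ (maps $V(H)\to V(G)$ sending edges to edges). $S_0$ is the graph with one vertex and no edges. For $k\ge0$, $S_{2,1^k}$ is the tree with vertex set $\{1,\ldots,k+3\}$ and edge set $\{\{1,j\}:2\le j\le k+2\}\cup\{\{k+2,k+3\}\}$. *)

(* Defs.v *)
From mathcomp Require Import all_boot.
Set Implicit Arguments. Unset Strict Implicit. Unset Printing Implicit Defensive.

Definition simple_graph (T : finType) (e : rel T) : Prop :=
  symmetric e /\ irreflexive e.

Definition hom (V : finType) (eH : rel V) (T : finType) (eG : rel T) : nat :=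
  #|[set f : {ffun V -> T} | [forall u, forall v, eH u v ==> eG (f u) (f v)]]|.

Definition S0_rel : rel 'I_1 := fun _ _ => false.

(* S_{2,1^k} on vertices 'I_(k+3); vertex i (1-based) is index i-1.
   Edges {1,j} (2 <= j <= k+2) become {0, j'} (1 <= j' <= k+1);
   edge {k+2,k+3} becomes {k+1, k+2}. *)
Definition S21_rel (k : nat) : rel 'I_(k + 3) := fun u v =>
  [|| (val u == 0) && (1 <= val v <= k + 1),
      (val v == 0) && (1 <= val u <= k + 1),
      (val u == k + 1) && (val v == k + 2)
    | (val u == k + 2) && (val v == k + 1)].
Arguments S21_rel k : clear implicits.

(* Main.v *)
Require Import Defs.
From mathcomp Require Import all_boot.
From mathcomp Require Import zify.

Section K.
Variables (T : finType) (e : rel T).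

Definition A k := [set f : {ffun 'I_(k + 3) -> T} |
   [forall u, forall v, S21_rel k u v ==> e (f u) (f v)]].

Definition sh k (i : 'I_(k+3)) : 'I_(k.+1+3) :=
  @inord (k+3) (if val i == 0 then 0 else (val i).+1).

Definition g k (f : {ffun 'I_(k.+1 + 3) -> T}) : {ffun 'I_(k+3) -> T} :=
  [ffun i => f (sh k i)].

Lemma shK k (i : 'I_(k+3)) : nat_of_ord (sh k i) = if nat_of_ord i == 0 then 0 else (nat_of_ord i).+1.
Proof.
rewrite /sh; apply: inordK; have := ltn_ord i; case: ifP => _ h //; exact: h.
Qed.

Lemma one_lt k : 1 < k.+1 + 3. Proof. by rewrite addnS. Qed.
Definition one1 k : 'I_(k.+1+3) := Ordinal (one_lt k).

Lemma key k : #|A k.+1| <= #|T| * #|A k|.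
Proof.
pose phi := fun f : {ffun 'I_(k.+1 + 3) -> T} => (f (one1 k), g k f).
have inj : injective phi.
  move=> f1 f2 [] h1 h2; apply/ffunP => j.
  have [j1|j1] := eqVneq (val j) 1.
    by have -> : j = one1 k by apply/val_inj.
  have hi : (if nat_of_ord j == 0 then 0 else (nat_of_ord j).-1) < k + 3.
    have := ltn_ord j; case: eqP => _ h; lia.
  pose i : 'I_(k+3) := Ordinal hi.
  have -> : j = sh k i.
    apply/val_inj => /=; rewrite shK /=.
    by case: (nat_of_ord j) (j1 : nat_of_ord j != 1) => [|[|n]].
  by move/ffunP: h2 => /(_ i); rewrite !ffunE.
have sub : phi @: A k.+1 \subset setX [set: T] (A k).
  apply/subsetP => _ /imsetP [f fA ->]; rewrite inE /= inE.
  move: fA; rewrite !inE => /forallP H; apply/forallP => u; apply/forallP => v.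
  apply/implyP => uv; rewrite !ffunE.
  have := H (sh k u) => /forallP /(_ (sh k v)) /implyP; apply.
  move: uv; rewrite /S21_rel /= !shK.
  case: (nat_of_ord u == 0) / eqP => hu; case: (nat_of_ord v == 0) / eqP => hv //=; lia.
rewrite -(card_imset _ inj); apply: leq_trans (subset_leq_card sub) _.
by rewrite cardsX cardsT.
Qed.

End K.

Theorem theorem3p1 (m : nat) (hm : 2 <= m) (T : finType) (e : rel T)
  (hG : simple_graph e) :
  hom S0_rel e * hom (S21_rel (m - 2)) e >= hom (S21_rel (m - 1)) e.
Proof.
have -> : m - 1 = (m - 2).+1 by lia.
move: (m - 2) => k.
have -> : hom S0_rel e = #|T|.
  rewrite /hom.
  have -> : [set f : {ffun 'I_1 -> T} | [forall u, forall v, S0_rel u v ==> e (f u) (f v)]] = setT.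
    by apply/setP => f; rewrite !inE; apply/forallP => u; apply/forallP.
  by rewrite cardsT card_ffun card_ord expn1.
exact: (@key T e k).
Qed.
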